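(* Let $A$ be an integral domain with quotient field $K$, so that $\mathrm{reg}(A) = A\setminus\{0\}$. Then the following are equivalent: (a) $A$ is Egyptian. (b) $A$ is the only $\mathrm{reg}(A)$-regular $\mathrm{reg}(A)$-factroid of $A$ containing $1$. (c) $K$ is the only $\mathrm{reg}(A)$-factroid of $K$ (viewed as an $A$-module) containing $1$. More generally, the Egyptian elements of $A$ (resp., $K$) are precisely the elements of the smallest $\mathrm{reg}(A)$-regular $\mathrm{reg}(A)$-factroid $G^{\mathrm{reg}(A)}_A(1)$ of $A$ (resp., the smallest $\mathrm{reg}(A)$-factroid $[1]^{\mathrm{reg}(A)}_K$ of $K$) containing $1$.
   Context: For a subset $T$ of a ring $A$ and an $A$-module $M$, a $T$-factroid of $M$ is an additive subgroup $F$ of $M$ such that for all $x\in M$ and $t\in T$, $tx\in F$ implies $x\in F$; $[S]^T_M$ denotes the smallest $T$-factroid of $M$ containing $S\subseteq M$. For a multiplicative set $W$ and $T\subseteq A$, a $W$-factroid $F$ of $M$ is $T$-regular if for all $h\in T$ and $x\in M$, $hx\in[hF]^W_M$ implies $x\in F$ (where $hF=\{hy\mid y\in F\}$). $G^{W}_A(1):=\{a\in A\mid ha\in[h]^W_A \text{ for some } h\in W\}$. $\mathrm{reg}(A)$ is the set of nonzerodivisors of $A$. The reciprocal complement $R(A)$ is the set of all finite sums $\frac{1}{d_1}+\cdots+\frac{1}{d_n}\in K$ with $d_i\in A\setminus\{0\}$; an element of $K$ is Egyptian if it lies in $R(A)$, an element $a\in A$ is Egyptian if $a\in R(A)$, and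 $A$ is Egyptian if every element of $A$ (equivalently of $K$) is Egyptian. *)

(* Defs.v *)
From HB Require Import structures.
From mathcomp Require Import all_boot all_order all_algebra.
From mathcomp Require Import fraction.
Set Implicit Arguments. Unset Strict Implicit. Unset Printing Implicit Defensive.
Import GRing.Theory.
Local Open Scope ring_scope.

Definition reg (A : comRingType) (a : A) : Prop :=
  forall b : A, a * b = 0 -> b = 0.

Definition is_factroid (A : comRingType) (M : zmodType) (act : A -> M -> M)
  (T : A -> Prop) (F : M -> Prop) : Prop :=
  [/\ F 0,
      (forall x y, F x -> F y -> F (x - y)) &
      (forall (x : M) (t : A), T t -> F (act t x) -> F x)].

Definition gen_factroid (A : comRingType) (M : zmodType) (act : A -> M -> M)
  (T : A -> Prop) (S : M -> Prop) : M -> Prop :=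
  fun x => forall F : M -> Prop, is_factroid act T F ->
             (forall y, S y -> F y) -> F x.

Definition scale_set (A : comRingType) (M : zmodType) (act : A -> M -> M)
  (h : A) (F : M -> Prop) : M -> Prop :=
  fun z => exists2 y, F y & z = act h y.

Definition is_regular (A : comRingType) (M : zmodType) (act : A -> M -> M)
  (W T : A -> Prop) (F : M -> Prop) : Prop :=
  forall (h : A) (x : M), T h ->
    gen_factroid act W (scale_set act h F) (act h x) -> F x.

Definition mulact (A : comRingType) : A -> A -> A := fun a x => a * x.

Definition G1 (A : comRingType) (W : A -> Prop) : A -> Prop :=
  fun a => exists2 h, W h & gen_factroid (@mulact A) W (fun y => y = h) (h * a).

Definition toK (A : idomainType) : A -> {fraction A} := @tofrac A.

Definition Kact (A : idomainType) : A -> {fraction A} -> {fraction A} :=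
  fun a x => toK a * x.

Definition egyptian (A : idomainType) (x : {fraction A}) : Prop :=
  exists s : seq A, [/\ s != [::], all (fun d => d != 0) s &
                        x = \sum_(d <- s) (toK d)^-1].

Definition egyptian_domain (A : idomainType) : Prop :=
  forall a : A, egyptian (toK a).

(* Main.v *)
Require Import Defs.
From mathcomp Require Import all_boot all_order all_algebra.
From mathcomp Require Import fraction.
From mathcomp Require Import ring.
Import GRing.Theory.
Local Open Scope ring_scope.

Section Helpers.
Local Open Scope quotient_scope.
Lemma fracE (A : idomainType) (x : {fraction A}) :
  exists a b : A, b != 0 /\ x = tofrac a / tofrac b.
Proof.
elim/quotW: x => r.
exists (frac r).1, (frac r).2; split; first exact: denom_ratioP.
have h2 := denom_ratioP r.
apply: (@mulIf _ (tofrac (frac r).2)); first by rewrite tofrac_eq0.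
rewrite mulfVK ?tofrac_eq0 //.
rewrite /FracField.tofrac; unlock.
change (FracField.mul (\pi_({fraction A}) r) (\pi_({fraction A}) (Ratio \d_r 1)) = \pi_({fraction A}) (Ratio \n_r 1)).
rewrite -FracField.pi_mul.
apply/eqP; rewrite FracField.equivf_def /FracField.mulf.
rewrite !numden_Ratio ?mulr1 ?oner_neq0 ?mulf_neq0 //.
by rewrite mulrC.
Qed.
End Helpers.

Section Proof.
Set Implicit Arguments.
Variable A : idomainType.
Local Notation K := {fraction A}.

Lemma regE (t : A) : reg t <-> t != 0.
Proof.
split.
  move=> H; apply/eqP => t0; have := H 1; rewrite t0 mul0r => /(_ erefl) /eqP.
  by rewrite oner_eq0.
by move=> tn b /eqP; rewrite mulf_eq0 (negbTE tn) /= => /eqP.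
Qed.

Lemma toK_neq0 (t : A) : t != 0 -> toK t != 0.
Proof. by rewrite /toK tofrac_eq0. Qed.

Lemma egy_inv (d : A) : d != 0 -> egyptian (toK d)^-1.
Proof. by move=> dn; exists [:: d]; rewrite /= dn big_seq1. Qed.

Lemma egy_add (x y : K) : egyptian x -> egyptian y -> egyptian (x + y).
Proof.
move=> [s [s0 sa ->]] [t [t0 ta ->]]; exists (s ++ t); split.
- by case: s s0 {sa}.
- by rewrite all_cat sa ta.
- by rewrite big_cat.
Qed.

Lemma egy_opp (x : K) : egyptian x -> egyptian (- x).
Proof.
move=> [s [s0 sa ->]]; exists (map (fun d => - d) s); split.
- by case: s s0 {sa}.
- by rewrite all_map; apply/allP => d /(allP sa) /=; rewrite oppr_eq0.
- by rewrite big_map -sumrN; apply: eq_bigr => d _; rewrite /toK rmorphN invrN.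
Qed.

Lemma egy1 : egyptian (1 : K).
Proof. by have := @egy_inv 1 (oner_neq0 A); rewrite /toK rmorph1 invr1. Qed.

Lemma egy0 : egyptian (0 : K).
Proof. by have := egy_add egy1 (egy_opp egy1); rewrite subrr. Qed.

Lemma egy_sub (x y : K) : egyptian x -> egyptian y -> egyptian (x - y).
Proof. by move=> hx hy; apply: egy_add hx (egy_opp hy). Qed.

Lemma egy_div (t : A) (x : K) : t != 0 -> egyptian (toK t * x) -> egyptian x.
Proof.
move=> tn [s [s0 sa e]]; exists (map (fun d => t * d) s); split.
- by case: s s0 {sa e}.
- by rewrite all_map; apply/allP => d /(allP sa) /=; rewrite mulf_eq0 negb_or tn.
- rewrite big_map.
  under eq_bigr => d _ do rewrite /toK rmorphM invfM.
  rewrite -mulr_sumr -/toK -e mulrA mulVf ?mul1r //; exact: toK_neq0.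
Qed.

Lemma R_factroid : is_factroid (@Kact A) (@reg A) (@egyptian A).
Proof.
split; first exact: egy0; first exact: egy_sub.
by move=> x t /regE tn; apply: egy_div.
Qed.

Lemma fact_add (M : zmodType) act (F : M -> Prop) :
  is_factroid act (@reg A) F -> forall x y, F x -> F y -> F (x + y).
Proof.
move=> [F0 FB _] x y Fx Fy.
have := FB _ _ Fx (FB _ _ F0 Fy); by rewrite sub0r opprK.
Qed.

Lemma R_in_F (F : K -> Prop) : is_factroid (@Kact A) (@reg A) F -> F 1 ->
  forall x, egyptian x -> F x.
Proof.
move=> hF F1 x [s [_ sa ->]]; elim: s sa => [|d s IH] /=.
  by rewrite big_nil; case: hF.
move=> /andP [dn sa]; rewrite big_cons; apply: (fact_add hF); last exact: IH.
case: hF => _ _ Fd; apply: (Fd _ d); first by apply/regE.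
by rewrite /Kact mulfV // toK_neq0.
Qed.

Lemma gen_K_iff (x : K) : egyptian x <-> gen_factroid (@Kact A) (@reg A) (fun y => y = 1) x.
Proof.
split.
  by move=> ex F hF hS; apply: (R_in_F hF) => //; apply: hS.
by move=> H; apply: H; [exact: R_factroid | move=> y ->; exact: egy1].
Qed.

Definition Sh (h : A) : A -> Prop := fun y => egyptian (toK y / toK h).

Lemma Sh_factroid h : is_factroid (@mulact A) (@reg A) (Sh h).
Proof.
split.
- by rewrite /Sh /toK rmorph0 mul0r; exact: egy0.
- by move=> x y; rewrite /Sh /toK rmorphB mulrBl; apply: egy_sub.
- move=> x t /regE tn; rewrite /Sh /mulact /toK rmorphM -mulrA => H.
  exact: egy_div tn H.
Qed.

Lemma ShM h y : h != 0 -> Sh h (h * y) <-> egyptian (toK y).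
Proof.
by move=> hn; rewrite /Sh /toK rmorphM mulrC mulrA mulVf ?mul1r // toK_neq0.
Qed.

Lemma G1_egy a : G1 (@reg A) a <-> egyptian (toK a).
Proof.
split.
  move=> [h /regE hn H]; apply/(@ShM h a hn); apply: H; first exact: Sh_factroid.
  by move=> y ->; have := (@ShM h 1 hn).2 egy1; rewrite mulr1.
move=> [s [s0 sa e]].
have key : forall F : A -> Prop, is_factroid (@mulact A) (@reg A) F ->
  forall s : seq A, all (fun d => d != 0) s -> forall m y,
    F ((\prod_(d <- s) d) * m) ->
    toK y = toK ((\prod_(d <- s) d) * m) * \sum_(d <- s) (toK d)^-1 -> F y.
  move=> F hF; elim=> [|d s' IH] /=.
    move=> _ m y _; rewrite !big_nil mulr0 => /eqP; rewrite /toK tofrac_eq0 => /eqP ->.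
    by case: hF.
  move=> /andP [dn sa'] m y Fh ey.
  rewrite !big_cons in Fh ey.
  have Fc : F ((\prod_(d0 <- s') d0) * m).
    case: hF => _ _ Fd; apply: (Fd _ d); first by apply/regE.
    by rewrite /mulact mulrA.
  have -> : y = (y - (\prod_(d0 <- s') d0) * m) + (\prod_(d0 <- s') d0) * m.
    by rewrite subrK.
  apply: (fact_add hF) => //; apply: (IH sa' (m * d)).
    suff -> : (\prod_(j <- s') j) * (m * d) = d * (\prod_(j <- s') j) * m by [].
    ring.
  move: ey; rewrite /toK !tofracB !tofracM => ->.
  have dK : tofrac d != 0 by rewrite tofrac_eq0.
  field.
  exact: dK.
exists (\prod_(d <- s) d).
  apply/regE; rewrite prodf_seq_neq0; apply/allP => d /(allP sa) //.
move=> F hF hS; apply: (key F hF s sa 1).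
  by rewrite mulr1; apply: hS.
by rewrite mulr1 /toK tofracM -/(toK a) e.
Qed.

Lemma main_sec :
  [/\ (egyptian_domain A <->
         (forall F : A -> Prop,
            is_factroid (@mulact A) (@reg A) F ->
            is_regular (@mulact A) (@reg A) (@reg A) F ->
            F 1 -> forall a : A, F a)),
      (egyptian_domain A <->
         (forall F : {fraction A} -> Prop,
            is_factroid (@Kact A) (@reg A) F ->
            F 1 -> forall x : {fraction A}, F x)),
      [/\ is_factroid (@mulact A) (@reg A) (G1 (@reg A)),
          is_regular (@mulact A) (@reg A) (@reg A) (G1 (@reg A)),
          G1 (@reg A) 1 &
          forall F : A -> Prop,
            is_factroid (@mulact A) (@reg A) F ->
            is_regular (@mulact A) (@reg A) (@reg A) F ->
            F 1 -> forall a, G1 (@reg A) a -> F a],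
      (forall a : A, egyptian (toK a) <-> G1 (@reg A) a) &
      (forall x : {fraction A},
          egyptian x <-> gen_factroid (@Kact A) (@reg A) (fun y => y = 1) x)].
Proof.
have Gfact : is_factroid (@mulact A) (@reg A) (G1 (@reg A)).
  split.
  - by apply/G1_egy; rewrite /toK rmorph0; exact: egy0.
  - move=> x y /G1_egy hx /G1_egy hy; apply/G1_egy.
    by rewrite /toK rmorphB; apply: egy_sub.
  - move=> x t /regE tn /G1_egy; rewrite /mulact /toK rmorphM => H.
    by apply/G1_egy; exact: egy_div tn H.
have Greg : is_regular (@mulact A) (@reg A) (@reg A) (G1 (@reg A)).
  move=> h x /regE hn H; apply/G1_egy; apply/(@ShM h x hn).
  apply: H; first exact: Sh_factroid.
  move=> z [y /G1_egy Gy ->]; exact/(@ShM h y hn).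
have G11 : G1 (@reg A) 1 by apply/G1_egy; rewrite /toK rmorph1; exact: egy1.
have Gmin : forall F : A -> Prop,
    is_factroid (@mulact A) (@reg A) F ->
    is_regular (@mulact A) (@reg A) (@reg A) F ->
    F 1 -> forall a, G1 (@reg A) a -> F a.
  move=> F hF hR F1 a [h hh H]; apply: (hR h a hh).
  move=> F' hF' hS; apply: H hF' _ => y ->; apply: hS; exists 1 => //.
  by rewrite /mulact mulr1.
split=> //.
- split.
    move=> hE F hF hR F1 a; apply: (Gmin F hF hR F1); exact/G1_egy.
  by move=> H a; apply/G1_egy; apply: H.
- split.
    move=> hE F hF F1 x; have [a [b [bn ->]]] := fracE A x.
    case: hF => [F0 FB Fd]; apply: (Fd _ b); first exact/regE.
    rewrite /Kact /toK mulrC -mulrA mulVf ?mulr1 ?tofrac_eq0 //.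
    exact: (R_in_F (And3 F0 FB Fd) F1 (hE a)).
  by move=> H a; apply: H => //; [exact: R_factroid | exact: egy1].
- by move=> a; split => /G1_egy.
- exact: gen_K_iff.
Qed.

End Proof.

Theorem corollary7p11 (A : idomainType) :
  [/\ (egyptian_domain A <->
         (forall F : A -> Prop,
            is_factroid (@mulact A) (@reg A) F ->
            is_regular (@mulact A) (@reg A) (@reg A) F ->
            F 1 -> forall a : A, F a)),
      (egyptian_domain A <->
         (forall F : {fraction A} -> Prop,
            is_factroid (@Kact A) (@reg A) F ->
            F 1 -> forall x : {fraction A}, F x)),
      (* G^{reg}_A(1) is the smallest reg-regular reg-factroid of A containing 1 *)
      [/\ is_factroid (@mulact A) (@reg A) (G1 (@reg A)),
          is_regular (@mulact A) (@reg A) (@reg A) (G1 (@reg A)),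
          G1 (@reg A) 1 &
          forall F : A -> Prop,
            is_factroid (@mulact A) (@reg A) F ->
            is_regular (@mulact A) (@reg A) (@reg A) F ->
            F 1 -> forall a, G1 (@reg A) a -> F a],
      (forall a : A, egyptian (toK a) <-> G1 (@reg A) a) &
      (forall x : {fraction A},
          egyptian x <-> gen_factroid (@Kact A) (@reg A) (fun y => y = 1) x)].
Proof. exact: main_sec. Qed.
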